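(* Let $m\ge1$ and $0\le q\le m(m-1)/2$ be integers. (i) If a sequence $(\mu^{(n)})\subset\mathcal H^{\rm loc}_{q,m}$ converges algebraically to $\mu^{(\infty)}\in\mathcal H^{\rm loc}_m$, then it converges infinitesimally to $\mu^{(\infty)}$. (ii) The converse of (i) is false: there exist sequences in $\mathcal H^{\rm loc}_{q,m}$ (for suitable $q,m$) which converge infinitesimally to some $\mu^{(\infty)}\in\mathcal H^{\rm loc}_m$ but do not converge algebraically to it.
   Context: Notation. For $0\le q\le m(m-1)/2$ write $\mathbb R^{q+m}=\mathbb R^q\oplus\mathbb R^m$ with standard inner product $\langle\cdot,\cdot\rangle_{\rm st}$ on $\mathbb R^m$. Let $\mathcal V_{q,m}$ be the quotient of the space $\Lambda^2(\mathbb R^{q+m})^*\otimes\mathbb R^{q+m}$ of skew-symmetric brackets on $\mathbb R^{q+m}$ by the change-of-basis action of $\mathrm{GL}(q)\times\mathrm O(m)$ (block-diagonal in $\mathrm{GL}(q+m)$), with the quotient (''standard'') topology. $\mathcal H^{\rm loc}_{q,m}\subset\mathcal V_{q,m}$ is the set of classes of brackets $\mu$ such that: (h1) $\mu$ satisfies the Jacobi identity, $\mu(\mathbb R^q,\mathbb R^q)\subset\mathbb R^q$, $\mu(\mathbb R^q,\mathbb R^m)\subset\mathbb R^m$; (h2) $\langle\mu(Z,X),Y\rangle_{\rm st}+\langle X,\mu(Z,Y)\rangle_{\rm st}=0$ for $X,Y\in\mathbb R^m$, $Z\in\mathbb R^q$; (h3) no nonzero $Z\in\mathbb R^q$ satisfies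 $\mu(Z,\mathbb R^m)=0$. $\mathcal H^{\rm loc}_m=\bigcup_q\mathcal H^{\rm loc}_{q,m}$. If $\tilde\mu$ satisfies (h1),(h2) but not (h3), let $\mathbb R^{q-q'}=\{Z\in\mathbb R^q:\tilde\mu(Z,\mathbb R^m)=0\}$ ($0\le q'<q$), choose a complement $\mathbb R^{q'}$ so that $\mathbb R^q=\mathbb R^{q-q'}\oplus\mathbb R^{q'}$, and define the restriction $\tilde\mu_{|q',m}=\mathrm{pr}_{\mathbb R^{q'+m}}\circ\tilde\mu|_{\mathbb R^{q'+m}\times\mathbb R^{q'+m}}$, where $\mathrm{pr}$ is the projection along $\mathbb R^{q-q'}$; then $\tilde\mu_{|q',m}\in\mathcal H^{\rm loc}_{q',m}$. Algebraic convergence. $(\mu^{(n)})\subset\mathcal H^{\rm loc}_{q,m}$ converges algebraically to $\mu^{(\infty)}\in\mathcal H^{\rm loc}_m$ if either (a) $\mu^{(\infty)}\in\mathcal H^{\rm loc}_{q,m}$ and $\mu^{(n)}\to\mu^{(\infty)}$ in $\mathcal V_{q,m}$, or (b) $\mu^{(\infty)}\in\mathcal H^{\rm loc}_{q',m}$ with $q'<q$ and $\mu^{(n)}\to\tilde\mu$ in $\mathcal V_{q,m}$ for some $\tilde\mu\in\mathcal V_{q,m}\setminus\mathcal H^{\rm loc}_{q,m}$ (satisfying (h1),(h2)) with $\tilde\mu_{|q',m}=\mu^{(\infty)}$. Each $\mu\in\mathcal H^{\rm loc}_m$ determines, uniquely up to equivariant local isometry, a locally homogeneous Riemannian $m$-manifold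 $(\mathsf G_\mu/\mathsf H_\mu,g_\mu)$ ($\mathsf G_\mu$ simply connected with Lie algebra $(\mathbb R^{q+m},\mu)$, $\mathsf H_\mu$ the connected subgroup with Lie algebra $\mathbb R^q$) with tangent space at the origin $o$ identified isometrically with $(\mathbb R^m,\langle,\rangle_{\rm st})$. With $\mathrm{Rm}(X\wedge Y)=\nabla_{[X,Y]}-[\nabla_X,\nabla_Y]$, let $\mathrm{Rm}^k(\mu)(X_1,\dots,X_k|Y_1\wedge Y_2)=((\nabla^{g_\mu})^k_{X_1,\dots,X_k}\mathrm{Rm})(Y_1\wedge Y_2)$ at $o$. Let $\imath(m)$ be the maximum Singer invariant of locally homogeneous spaces of dimension $\le m$ (the Singer invariant of $(M,g)$ being the least $k$ with $\mathfrak i(k)=\mathfrak i(k+1)$, where $\mathfrak i(k)=\{A\in\mathfrak{so}(T_pM):A\cdot(\nabla^j\mathrm{Rm})_p=0,\ 0\le j\le k\}$). Infinitesimal convergence. $(\mu^{(n)})$ converges infinitesimally to $\mu^{(\infty)}$ if for every $s\ge\imath(m)+2$ there exist $a_n\in\mathrm O(m)$ with $a_n\cdot\mathrm{Rm}^k(\mu^{(n)})\to\mathrm{Rm}^k(\mu^{(\infty)})$ for all $0\le k\le s$. *)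

(* Defs.v *)
From Stdlib Require Import Reals Lra List Arith Bool.
Import ListNotations.
Open Scope R_scope.

Fixpoint fsum (n : nat) (f : nat -> R) : R :=
  match n with O => 0 | S n' => fsum n' f + f n' end.

Definition kdelta (i j : nat) : R := if Nat.eqb i j then 1 else 0.

(* A bracket on R^N = R^q (+) R^m (N = q+m) is given by its structure
   constants: c i j k = k-th coordinate of mu(e_i, e_j).  Only indices < N
   are ever used.  Coordinates 0..q-1 span R^q, coordinates q..q+m-1 span
   R^m (orthonormal for <,>_st). *)
Definition Br := nat -> nat -> nat -> R.

Definition IsSkew (N : nat) (c : Br) : Prop :=
  forall i j k, (i < N)%nat -> (j < N)%nat -> (k < N)%nat -> c i j k = - c j i k.

Definition InV (q m : nat) (c : Br) : Prop :=
  (q <= m * (m - 1) / 2)%nat /\ IsSkew (q + m) c.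

Definition Jacobi (N : nat) (c : Br) : Prop :=
  forall i j k l, (i < N)%nat -> (j < N)%nat -> (k < N)%nat -> (l < N)%nat ->
    fsum N (fun p => c i j p * c p k l + c j k p * c p i l + c k i p * c p j l) = 0.

Definition H1 (q m : nat) (c : Br) : Prop :=
  Jacobi (q + m) c /\
  (forall i j k, (i < q)%nat -> (j < q)%nat -> (q <= k < q + m)%nat -> c i j k = 0) /\
  (forall i j k, (i < q)%nat -> (q <= j < q + m)%nat -> (k < q)%nat -> c i j k = 0).

Definition H2 (q m : nat) (c : Br) : Prop :=
  forall z x y, (z < q)%nat -> (x < m)%nat -> (y < m)%nat ->
    c z (q + x)%nat (q + y)%nat + c z (q + y)%nat (q + x)%nat = 0.

Definition KillsRm (q m : nat) (c : Br) (Z : nat -> R) : Prop :=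
  forall j k, (j < m)%nat -> (k < q + m)%nat ->
    fsum q (fun i => Z i * c i (q + j)%nat k) = 0.

Definition H3 (q m : nat) (c : Br) : Prop :=
  forall Z : nat -> R, KillsRm q m c Z -> forall i, (i < q)%nat -> Z i = 0.

(* representatives of classes in H^loc_{q,m} *)
Definition InH (q m : nat) (c : Br) : Prop :=
  InV q m c /\ H1 q m c /\ H2 q m c /\ H3 q m c.

Definition IsGL (q : nat) (A Ai : nat -> nat -> R) : Prop :=
  forall i j, (i < q)%nat -> (j < q)%nat ->
    fsum q (fun l => A i l * Ai l j) = kdelta i j /\
    fsum q (fun l => Ai i l * A l j) = kdelta i j.

Definition IsO (m : nat) (B : nat -> nat -> R) : Prop :=
  forall i j, (i < m)%nat -> (j < m)%nat -> fsum m (fun l => B l i * B l j) = kdelta i j.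

Definition transp (B : nat -> nat -> R) : nat -> nat -> R := fun i j => B j i.

Definition blk (q : nat) (A B : nat -> nat -> R) : nat -> nat -> R :=
  fun i j => if andb (i <? q) (j <? q) then A i j
             else if andb (q <=? i) (q <=? j) then B (i - q)%nat (j - q)%nat else 0.

(* (g . mu)(X,Y) = g mu(g^{-1} X, g^{-1} Y), gi = g^{-1} *)
Definition act (N : nat) (g gi : nat -> nat -> R) (c : Br) : Br :=
  fun i j k => fsum N (fun a => fsum N (fun b => fsum N (fun l =>
                 gi a i * gi b j * c a b l * g k l))).

Definition actG (q m : nat) (A Ai B : nat -> nat -> R) (c : Br) : Br :=
  act (q + m) (blk q A B) (blk q Ai (transp B)) c.

(* convergence in the quotient topology of V_{q,m} (the quotient map is
   open, so the images of sup-norm balls form a neighbourhood basis) *)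
Definition convV (q m : nat) (mus : nat -> Br) (mu : Br) : Prop :=
  forall eps, eps > 0 -> exists N0, forall n, (N0 <= n)%nat ->
    exists A Ai B, IsGL q A Ai /\ IsO m B /\
      forall i j k, (i < q + m)%nat -> (j < q + m)%nat -> (k < q + m)%nat ->
        Rabs (actG q m A Ai B (mus n) i j k - mu i j k) < eps.

Definition equivV (q m : nat) (c c' : Br) : Prop :=
  exists A Ai B, IsGL q A Ai /\ IsO m B /\
    forall i j k, (i < q + m)%nat -> (j < q + m)%nat -> (k < q + m)%nat ->
      actG q m A Ai B c i j k = c' i j k.

(* Adapted representative: {Z in R^q : mu(Z,R^m)=0} = span(e_q', ..., e_{q-1}),
   so that span(e_0..e_{q'-1}) is the chosen complement R^{q'}. *)
Definition KerAdapted (q q' m : nat) (c : Br) : Prop :=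
  forall Z : nat -> R, KillsRm q m c Z <-> (forall i, (i < q')%nat -> Z i = 0).

(* restriction mu_{|q',m}: keep coordinates 0..q'-1 and q..q+m-1 (relabelled
   as 0..q'+m-1), projecting along span(e_q',...,e_{q-1}) *)
Definition relab (q q' : nat) (i : nat) : nat :=
  if i <? q' then i else (i + (q - q'))%nat.

Definition restr (q q' : nat) (c : Br) : Br :=
  fun i j k => c (relab q q' i) (relab q q' j) (relab q q' k).

Definition alg_conv (q m : nat) (mus : nat -> Br) (q' : nat) (muinf : Br) : Prop :=
  (q' = q /\ InH q m muinf /\ convV q m mus muinf) \/
  ((q' < q)%nat /\ InH q' m muinf /\
    exists mut : Br, InV q m mut /\ H1 q m mut /\ H2 q m mut /\ ~ H3 q m mut /\
      convV q m mus mut /\ KerAdapted q q' m mut /\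
      equivV q' m (restr q q' mut) muinf).

(* Nomizu map of the Levi-Civita connection (Kobayashi-Nomizu II, X.3):
   Lam x a b = a-th coordinate of Lambda(e_x) e_b, where
   Lambda(X)Y = 1/2 [X,Y]_m + U(X,Y),
   2<U(X,Y),Z> = <[Z,X]_m,Y> + <X,[Z,Y]_m>.  Indices of R^m: 0..m-1. *)
Definition Lam (q m : nat) (c : Br) (x : nat) : nat -> nat -> R :=
  fun a b => / 2 * c (q + x)%nat (q + b)%nat (q + a)%nat
           + / 2 * (c (q + a)%nat (q + x)%nat (q + b)%nat + c (q + a)%nat (q + b)%nat (q + x)%nat).

Definition adh (q m : nat) (c : Br) (h : nat) : nat -> nat -> R :=
  fun a b => c h (q + b)%nat (q + a)%nat.

Definition mm (m : nat) (L M : nat -> nat -> R) : nat -> nat -> R :=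
  fun a b => fsum m (fun l => L a l * M l b).

(* Rm(e_x /\ e_y) = nabla_{[X,Y]} - [nabla_X, nabla_Y]
   = Lambda([X,Y]_m) + ad([X,Y]_h)|_m - [Lambda(X), Lambda(Y)]  (minus the
   Kobayashi-Nomizu curvature R(X,Y)) *)
Definition Rm0 (q m : nat) (c : Br) (x y : nat) : nat -> nat -> R :=
  fun a b =>
    fsum m (fun z => c (q + x)%nat (q + y)%nat (q + z)%nat * Lam q m c z a b)
  + fsum q (fun h => c (q + x)%nat (q + y)%nat h * adh q m c h a b)
  - (mm m (Lam q m c x) (Lam q m c y) a b - mm m (Lam q m c y) (Lam q m c x) a b).

(* tensors T(X_1..X_k | Y_1 /\ Y_2) in End(R^m), on basis vectors:
   T xs y1 y2 a b = a-th coordinate of T(e_xs | e_y1 /\ e_y2) e_b *)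
Definition Tens := list nat -> nat -> nat -> nat -> nat -> R.

Fixpoint replace_nth (p v : nat) (l : list nat) : list nat :=
  match l, p with
  | [], _ => []
  | _ :: t, O => v :: t
  | h :: t, S p' => h :: replace_nth p' v t
  end.

Definition deriv (m : nat) (L : nat -> nat -> R) (T : Tens) : Tens :=
  fun xs y1 y2 a b =>
    fsum m (fun c => L a c * T xs y1 y2 c b)
  - fsum m (fun c => T xs y1 y2 a c * L c b)
  - fsum (length xs) (fun p => fsum m (fun c => L c (nth p xs O) * T (replace_nth p c xs) y1 y2 a b))
  - fsum m (fun c => L c y1 * T xs c y2 a b)
  - fsum m (fun c => L c y2 * T xs y1 c a b).

(* Rm^k(mu)(X_1,..,X_k | Y_1 /\ Y_2) = ((nabla^k)_{X_1..X_k} Rm)(Y_1/\Y_2) at o;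
   for invariant tensors, (nabla_X K)_o = Lambda(X) . K_o *)
Fixpoint RmK (q m : nat) (c : Br) (k : nat) : Tens :=
  match k with
  | O => fun _ y1 y2 a b => Rm0 q m c y1 y2 a b
  | S k' => fun xs y1 y2 a b =>
      match xs with
      | [] => 0
      | x :: xs' => deriv m (Lam q m c x) (RmK q m c k') xs' y1 y2 a b
      end
  end.

Fixpoint sumLists (m k : nat) (f : list nat -> R) : R :=
  match k with
  | O => f []
  | S k' => fsum m (fun z => sumLists m k' (fun zs => f (z :: zs)))
  end.

Fixpoint pw (a : nat -> nat -> R) (xs zs : list nat) : R :=
  match xs, zs with
  | x :: xs', z :: zs' => a x z * pw a xs' zs'
  | _, _ => 1
  end.

(* (a . T)(X.. | Y1/\Y2) = a T(a^{-1}X.. | a^{-1}Y1 /\ a^{-1}Y2) a^{-1}, a in O(m) *)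
Definition tact (m : nat) (a : nat -> nat -> R) (T : Tens) : Tens :=
  fun xs y1 y2 a0 b0 =>
    sumLists m (length xs) (fun zs => pw a xs zs *
      fsum m (fun z1 => fsum m (fun z2 => fsum m (fun c => fsum m (fun d =>
        a y1 z1 * a y2 z2 * a a0 c * a b0 d * T zs z1 z2 c d))))).

(* infinitesimal convergence (quantifying over all s is the
   same as over all s >= imath(m)+2, the condition being monotone in s) *)
Definition inf_conv (q m : nat) (mus : nat -> Br) (q' : nat) (muinf : Br) : Prop :=
  forall s : nat, exists an : nat -> nat -> nat -> R,
    (forall n, IsO m (an n)) /\
    forall (k : nat) (xs : list nat) (y1 y2 a b : nat),
      (k <= s)%nat -> length xs = k -> Forall (fun x => (x < m)%nat) xs ->
      (y1 < m)%nat -> (y2 < m)%nat -> (a < m)%nat -> (b < m)%nat ->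
      Un_cv (fun n => tact m (an n) (RmK q m (mus n) k) xs y1 y2 a b)
            (RmK q' m muinf k xs y1 y2 a b).

(* Main.v *)
Require Import Defs.
From Stdlib Require Import Reals Lra Lia List Arith Bool Setoid Morphisms Classical.
From Stdlib Require Import FunctionalExtensionality IndefiniteDescription.
Import ListNotations.
Open Scope R_scope.

Lemma fsum_ext n f g : (forall i, (i < n)%nat -> f i = g i) -> fsum n f = fsum n g.
Proof. induction n; simpl; intros H; [reflexivity|]. rewrite IHn by (intros; apply H; lia). rewrite H by lia. reflexivity. Qed.

#[export] Instance fsum_proper n : Proper (pointwise_relation nat eq ==> eq) (fsum n).
Proof. intros f g H. apply fsum_ext. intros; apply H. Qed.

Lemma fsum_plus n f g : fsum n (fun i => f i + g i) = fsum n f + fsum n g.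
Proof. induction n; simpl; [ring|]. rewrite IHn; ring. Qed.
Lemma fsum_minus n f g : fsum n (fun i => f i - g i) = fsum n f - fsum n g.
Proof. induction n; simpl; [ring|]. rewrite IHn; ring. Qed.
Lemma fsum_mult_l n c f : fsum n (fun i => c * f i) = c * fsum n f.
Proof. induction n; simpl; [ring|]. rewrite IHn; ring. Qed.
Lemma fsum_mult_r n c f : fsum n (fun i => f i * c) = fsum n f * c.
Proof. induction n; simpl; [ring|]. rewrite IHn; ring. Qed.
Lemma fsum_zero n f : (forall i, (i < n)%nat -> f i = 0) -> fsum n f = 0.
Proof. intros H. rewrite (fsum_ext n f (fun _ => 0)) by auto. clear H. induction n; simpl; [ring|]. rewrite IHn; ring. Qed.
Lemma fsum_swap n m (f : nat -> nat -> R) :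
  fsum n (fun i => fsum m (fun j => f i j)) = fsum m (fun j => fsum n (fun i => f i j)).
Proof. induction n; simpl. - symmetry; apply fsum_zero; auto. - rewrite IHn, <- fsum_plus. reflexivity. Qed.
Lemma fsum_split q m f : fsum (q + m) f = fsum q f + fsum m (fun i => f (q + i)%nat).
Proof. induction m; simpl. - rewrite Nat.add_0_r; ring. - rewrite Nat.add_succ_r; simpl. rewrite IHm; ring. Qed.
Lemma fsum_delta_l n j f : (j < n)%nat -> fsum n (fun l => kdelta l j * f l) = f j.
Proof. induction n; intros H; simpl; [lia|]. unfold kdelta at 2.
  destruct (Nat.eqb_spec n j).
  - subst. rewrite fsum_zero. ring. intros i Hi. unfold kdelta. destruct (Nat.eqb_spec i j); [lia|ring].
  - rewrite IHn by lia. ring. Qed.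
Lemma kdelta_sym i j : kdelta i j = kdelta j i.
Proof. unfold kdelta. destruct (Nat.eqb_spec i j), (Nat.eqb_spec j i); auto; lia. Qed.
Lemma fsum_delta_r n j f : (j < n)%nat -> fsum n (fun l => kdelta j l * f l) = f j.
Proof. intros H. rewrite <- (fsum_delta_l n j f H). apply fsum_ext; intros; rewrite kdelta_sym; auto. Qed.
Lemma fsum_indic n j f : (j < n)%nat -> fsum n (fun l => (if Nat.eqb l j then 1 else 0) * f l) = f j.
Proof. apply fsum_delta_l. Qed.
Lemma fsum_prod n k f g : fsum n f * fsum k g = fsum n (fun i => fsum k (fun j => f i * g j)).
Proof. rewrite <- fsum_mult_r. apply fsum_ext; intros. rewrite <- fsum_mult_l. reflexivity. Qed.

Lemma sumLists_ext_in m k f g :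
  (forall zs, length zs = k -> Forall (fun z => (z < m)%nat) zs -> f zs = g zs) ->
  sumLists m k f = sumLists m k g.
Proof.
  revert f g; induction k; intros f g H; simpl.
  - apply H; auto.
  - apply fsum_ext; intros z Hz. apply IHk. intros zs H1 H2. apply H; simpl; auto.
Qed.

#[export] Instance sumLists_proper m k : Proper (pointwise_relation (list nat) eq ==> eq) (sumLists m k).
Proof. intros f g H. apply sumLists_ext_in. intros; apply H. Qed.

Lemma sumLists_plus m k f g : sumLists m k (fun zs => f zs + g zs) = sumLists m k f + sumLists m k g.
Proof. revert f g; induction k; intros; simpl; auto. setoid_rewrite IHk. apply fsum_plus. Qed.
Lemma sumLists_minus m k f g : sumLists m k (fun zs => f zs - g zs) = sumLists m k f - sumLists m k g.
Proof. revert f g; induction k; intros; simpl; auto. setoid_rewrite IHk. apply fsum_minus. Qed.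
Lemma sumLists_mult_l m k c f : sumLists m k (fun zs => c * f zs) = c * sumLists m k f.
Proof. revert f; induction k; intros; simpl; auto. setoid_rewrite IHk. apply fsum_mult_l. Qed.
Lemma sumLists_zero m k f : (forall zs, length zs = k -> Forall (fun z => (z < m)%nat) zs -> f zs = 0) -> sumLists m k f = 0.
Proof. intros H. rewrite (sumLists_ext_in m k f (fun _ => 0)) by auto. clear H.
  induction k; simpl; auto. apply fsum_zero; auto. Qed.
Lemma sumLists_fsum m k n F :
  sumLists m k (fun zs => fsum n (fun i => F zs i)) = fsum n (fun i => sumLists m k (fun zs => F zs i)).
Proof. revert F; induction k; intros; simpl; auto. setoid_rewrite IHk. apply fsum_swap. Qed.

Definition tr (m : nat) (P : nat -> nat -> R) (f : nat -> R) (y : nat) : R :=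
  fsum m (fun z => P y z * f z).
Definition TL (m : nat) (P : nat -> nat -> R) (F : list nat -> R) (xs : list nat) : R :=
  sumLists m (length xs) (fun zs => pw P xs zs * F zs).

Lemma tr_ext m P f g y : (forall z, (z < m)%nat -> f z = g z) -> tr m P f y = tr m P g y.
Proof. intros H; unfold tr; apply fsum_ext; intros; rewrite H; auto. Qed.
#[export] Instance tr_proper m P : Proper (pointwise_relation nat eq ==> eq ==> eq) (tr m P).
Proof. intros f g H y y' <-. apply tr_ext; intros; apply H. Qed.

Lemma TL_nil m P F : TL m P F [] = F [].
Proof. unfold TL; simpl; ring. Qed.
Lemma TL_cons m P F x xs : TL m P F (x :: xs) = tr m P (fun z => TL m P (fun zs => F (z :: zs)) xs) x.
Proof. unfold TL, tr; simpl. apply fsum_ext; intros z _. rewrite <- sumLists_mult_l.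
  apply sumLists_ext_in; intros; ring. Qed.

Lemma TL_ext_in m P F G xs :
  (forall zs, length zs = length xs -> Forall (fun z => (z < m)%nat) zs -> F zs = G zs) ->
  TL m P F xs = TL m P G xs.
Proof. intros H; unfold TL; apply sumLists_ext_in; intros; rewrite H; auto. Qed.
#[export] Instance TL_proper m P : Proper (pointwise_relation (list nat) eq ==> eq ==> eq) (TL m P).
Proof. intros f g H y y' <-. apply TL_ext_in; intros; apply H. Qed.

Lemma tr_plus m P f g y : tr m P (fun z => f z + g z) y = tr m P f y + tr m P g y.
Proof. unfold tr. rewrite <- fsum_plus. apply fsum_ext; intros; ring. Qed.
Lemma tr_minus m P f g y : tr m P (fun z => f z - g z) y = tr m P f y - tr m P g y.
Proof. unfold tr. rewrite <- fsum_minus. apply fsum_ext; intros; ring. Qed.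
Lemma tr_mult m P c f y : tr m P (fun z => c * f z) y = c * tr m P f y.
Proof. unfold tr. rewrite <- fsum_mult_l. apply fsum_ext; intros; ring. Qed.
Lemma tr_fsum m P n F y : tr m P (fun z => fsum n (fun i => F z i)) y = fsum n (fun i => tr m P (fun z => F z i) y).
Proof. unfold tr. setoid_rewrite <- fsum_mult_l. apply fsum_swap. Qed.
Lemma tr_swap m n P Q F a b :
  tr m P (fun u => tr n Q (fun v => F u v) b) a = tr n Q (fun v => tr m P (fun u => F u v) a) b.
Proof. unfold tr. setoid_rewrite <- fsum_mult_l. rewrite fsum_swap. apply fsum_ext; intros; apply fsum_ext; intros; ring. Qed.

Lemma TL_plus m P F G xs : TL m P (fun zs => F zs + G zs) xs = TL m P F xs + TL m P G xs.
Proof. unfold TL. rewrite <- sumLists_plus. apply sumLists_ext_in; intros; ring. Qed.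
Lemma TL_minus m P F G xs : TL m P (fun zs => F zs - G zs) xs = TL m P F xs - TL m P G xs.
Proof. unfold TL. rewrite <- sumLists_minus. apply sumLists_ext_in; intros; ring. Qed.
Lemma TL_mult m P c F xs : TL m P (fun zs => c * F zs) xs = c * TL m P F xs.
Proof. unfold TL. rewrite <- sumLists_mult_l. apply sumLists_ext_in; intros; ring. Qed.
Lemma TL_fsum m P n F xs : TL m P (fun zs => fsum n (fun i => F zs i)) xs = fsum n (fun i => TL m P (fun zs => F zs i) xs).
Proof. unfold TL. rewrite <- sumLists_fsum. apply sumLists_ext_in; intros. rewrite <- fsum_mult_l; auto. Qed.
Lemma TL_tr_swap m n P Q F xs b :
  TL m P (fun zs => tr n Q (fun v => F zs v) b) xs = tr n Q (fun v => TL m P (fun zs => F zs v) xs) b.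
Proof. unfold tr. rewrite TL_fsum. apply fsum_ext; intros. apply TL_mult. Qed.

Lemma tr_comp m P Q f y : tr m P (fun z => tr m Q f z) y = tr m (mm m P Q) f y.
Proof. unfold tr, mm. setoid_rewrite <- fsum_mult_l. rewrite fsum_swap. apply fsum_ext; intros.
  rewrite <- fsum_mult_r. apply fsum_ext; intros; ring. Qed.

Lemma TL_comp m P Q F xs : TL m P (fun zs => TL m Q F zs) xs = TL m (mm m P Q) F xs.
Proof.
  revert F; induction xs as [|x xs IH]; intros F.
  - rewrite !TL_nil. reflexivity.
  - rewrite TL_cons. setoid_rewrite TL_cons.
    setoid_rewrite TL_tr_swap. setoid_rewrite IH. apply tr_comp.
Qed.

Lemma tact_canon m P T xs y1 y2 a b :
  tact m P T xs y1 y2 a b =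
  TL m P (fun zs => tr m P (fun z1 => tr m P (fun z2 => tr m P (fun c => tr m P (fun d => T zs z1 z2 c d) b) a) y2) y1) xs.
Proof.
  unfold tact, TL, tr. apply sumLists_ext_in; intros zs _ _. f_equal.
  apply fsum_ext; intros. rewrite <- !fsum_mult_l. apply fsum_ext; intros.
  rewrite <- !fsum_mult_l. apply fsum_ext; intros. rewrite <- !fsum_mult_l. apply fsum_ext; intros. ring.
Qed.

Definition conj (m : nat) (B L : nat -> nat -> R) (a b : nat) : R :=
  tr m B (fun v => tr m B (fun w => L v w) b) a.

Lemma pull_l m n B H G x :
  fsum n (fun z => tr m B (fun u => H u z) x * G z) = tr m B (fun u => fsum n (fun z => H u z * G z)) x.
Proof. rewrite tr_fsum. apply fsum_ext; intros. rewrite Rmult_comm, <- tr_mult. apply tr_ext; intros; ring. Qed.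
Lemma pull_r m n B H G x :
  fsum n (fun z => G z * tr m B (fun u => H u z) x) = tr m B (fun u => fsum n (fun z => G z * H u z)) x.
Proof. rewrite tr_fsum. apply fsum_ext; intros. rewrite <- tr_mult. apply tr_ext; intros; ring. Qed.

Lemma inner m B f g : IsO m B ->
  fsum m (fun z => tr m B f z * tr m B g z) = fsum m (fun z => f z * g z).
Proof.
  intros HO. unfold tr.
  transitivity (fsum m (fun u => fsum m (fun v => f u * g v * fsum m (fun z => B z u * B z v)))).
  - setoid_rewrite fsum_prod. rewrite fsum_swap. apply fsum_ext; intros.
    rewrite fsum_swap. apply fsum_ext; intros. rewrite <- fsum_mult_l. apply fsum_ext; intros. ring.
  - apply fsum_ext; intros u Hu.
    rewrite (fsum_ext m _ (fun v => kdelta v u * (f u * g v))).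
    + rewrite fsum_delta_l; auto.
    + intros v Hv. rewrite (HO u v Hu Hv). rewrite kdelta_sym. ring.
Qed.

Lemma GL_inner q A Ai X Y : IsGL q A Ai ->
  fsum q (fun h => fsum q (fun l => A h l * X l) * fsum q (fun al => Ai al h * Y al)) = fsum q (fun l => X l * Y l).
Proof.
  intros HG.
  transitivity (fsum q (fun l => fsum q (fun al => X l * Y al * fsum q (fun h => Ai al h * A h l)))).
  - setoid_rewrite fsum_prod. rewrite fsum_swap. apply fsum_ext; intros.
    rewrite fsum_swap. apply fsum_ext; intros. rewrite <- fsum_mult_l. apply fsum_ext; intros. ring.
  - apply fsum_ext; intros l Hl.
    rewrite (fsum_ext q _ (fun al => kdelta al l * (X l * Y al))).
    + rewrite fsum_delta_l; auto.
    + intros al Hal. destruct (HG al l Hal Hl) as [_ E]. rewrite E. ring.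
Qed.

Lemma conj_ext m B L M a b : (forall v w, (v < m)%nat -> (w < m)%nat -> L v w = M v w) -> conj m B L a b = conj m B M a b.
Proof. intros H. unfold conj. apply tr_ext; intros. apply tr_ext; intros. auto. Qed.
Lemma conj_plus m B L M a b : conj m B (fun v w => L v w + M v w) a b = conj m B L a b + conj m B M a b.
Proof. unfold conj. rewrite <- tr_plus. apply tr_ext; intros. apply tr_plus. Qed.
Lemma conj_minus m B L M a b : conj m B (fun v w => L v w - M v w) a b = conj m B L a b - conj m B M a b.
Proof. unfold conj. rewrite <- tr_minus. apply tr_ext; intros. apply tr_minus. Qed.
Lemma conj_mult m B c L a b : conj m B (fun v w => c * L v w) a b = c * conj m B L a b.
Proof. unfold conj. rewrite <- tr_mult. apply tr_ext; intros. apply tr_mult. Qed.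
Lemma conj_fsum m B n L a b : conj m B (fun v w => fsum n (fun i => L i v w)) a b = fsum n (fun i => conj m B (L i) a b).
Proof. unfold conj. rewrite <- tr_fsum. apply tr_ext; intros. apply tr_fsum. Qed.
Lemma conj_tr m B L x a b : conj m B (fun v w => tr m B (fun u => L u v w) x) a b = tr m B (fun u => conj m B (L u) a b) x.
Proof. unfold conj. symmetry. rewrite tr_swap. apply tr_ext; intros. rewrite tr_swap. reflexivity. Qed.

Lemma mm_conj m B L M a b : IsO m B -> mm m (conj m B L) (conj m B M) a b = conj m B (mm m L M) a b.
Proof.
  intros HO. unfold mm, conj. rewrite pull_l. apply tr_ext; intros v _.
  rewrite inner by auto. rewrite pull_r. reflexivity.
Qed.

Lemma slot_left m B L f a : IsO m B ->
  fsum m (fun c => conj m B L a c * tr m B f c) = tr m B (fun v => fsum m (fun c => L v c * f c)) a.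
Proof. intros HO. unfold conj. rewrite pull_l. apply tr_ext; intros. apply inner; auto. Qed.
Lemma slot_right m B L f b : IsO m B ->
  fsum m (fun c => tr m B f c * conj m B L c b) = tr m B (fun w => fsum m (fun c => f c * L c w)) b.
Proof. intros HO. unfold conj. setoid_rewrite tr_swap. rewrite pull_r. apply tr_ext; intros. apply inner; auto. Qed.
Lemma slot_trans m B L f y : IsO m B ->
  fsum m (fun c => conj m B L c y * tr m B f c) = tr m B (fun w => fsum m (fun c => L c w * f c)) y.
Proof. intros HO. transitivity (fsum m (fun c => tr m B f c * conj m B L c y)).
  apply fsum_ext; intros; ring. rewrite slot_right by auto. apply tr_ext; intros; apply fsum_ext; intros; ring. Qed.

Lemma length_replace p v l : length (replace_nth p v l) = length l.
Proof. revert p; induction l; intros [|p]; simpl; auto. Qed.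
Lemma Forall_replace (P : nat -> Prop) p v l : Forall P l -> P v -> Forall P (replace_nth p v l).
Proof. revert p; induction l; intros [|p] H Hv; simpl; auto; inversion H; subst; constructor; auto. Qed.
Lemma Forall_nth (P : nat -> Prop) p l : Forall P l -> (p < length l)%nat -> P (nth p l O).
Proof. revert p; induction l; intros [|p] H Hp; simpl in *; try lia; inversion H; subst; auto. apply IHl; auto; lia. Qed.

Lemma pullTL_r m P K F xs :
  fsum m (fun c => K c * TL m P (F c) xs) = TL m P (fun zs => fsum m (fun c => K c * F c zs)) xs.
Proof. rewrite TL_fsum. apply fsum_ext; intros. rewrite TL_mult. reflexivity. Qed.
Lemma pullTL_l m P K F xs :
  fsum m (fun c => TL m P (F c) xs * K c) = TL m P (fun zs => fsum m (fun c => F c zs * K c)) xs.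
Proof. rewrite TL_fsum. apply fsum_ext; intros. rewrite Rmult_comm, <- TL_mult. apply TL_ext_in; intros; ring. Qed.

Lemma LS m B L G xs p : IsO m B -> (p < length xs)%nat ->
  fsum m (fun c => conj m B L c (nth p xs O) * TL m B G (replace_nth p c xs)) =
  TL m B (fun zs => fsum m (fun c => L c (nth p zs O) * G (replace_nth p c zs))) xs.
Proof.
  intros HO. revert p G; induction xs as [|x xs IH]; intros p G Hp; simpl in Hp; [lia|].
  destruct p as [|p].
  - simpl. rewrite TL_cons. setoid_rewrite TL_cons. rewrite slot_trans by auto.
    apply tr_ext; intros z _. rewrite pullTL_r. apply TL_ext_in; intros. simpl. reflexivity.
  - simpl. setoid_rewrite TL_cons. rewrite pull_r. apply tr_ext; intros z _.
    rewrite IH by lia. reflexivity.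
Qed.

Lemma tact_minus m P T1 T2 xs y1 y2 a b :
  tact m P (fun zs z1 z2 c d => T1 zs z1 z2 c d - T2 zs z1 z2 c d) xs y1 y2 a b =
  tact m P T1 xs y1 y2 a b - tact m P T2 xs y1 y2 a b.
Proof. rewrite !tact_canon. rewrite <- TL_minus. apply TL_ext_in; intros.
  rewrite <- tr_minus. apply tr_ext; intros. rewrite <- tr_minus. apply tr_ext; intros.
  rewrite <- tr_minus. apply tr_ext; intros. rewrite <- tr_minus. apply tr_ext; intros. reflexivity. Qed.

Lemma D1 m B L T xs y1 y2 a b : IsO m B ->
  fsum m (fun c => conj m B L a c * tact m B T xs y1 y2 c b) =
  tact m B (fun zs z1 z2 a' b' => fsum m (fun c => L a' c * T zs z1 z2 c b')) xs y1 y2 a b.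
Proof.
  intros HO. setoid_rewrite tact_canon. rewrite pullTL_r. apply TL_ext_in; intros zs _ _.
  rewrite pull_r. apply tr_ext; intros z1 _. rewrite pull_r. apply tr_ext; intros z2 _.
  rewrite slot_left by auto. apply tr_ext; intros v _. rewrite pull_r. reflexivity.
Qed.

Lemma D2 m B L T xs y1 y2 a b : IsO m B ->
  fsum m (fun c => tact m B T xs y1 y2 a c * conj m B L c b) =
  tact m B (fun zs z1 z2 a' b' => fsum m (fun c => T zs z1 z2 a' c * L c b')) xs y1 y2 a b.
Proof.
  intros HO. setoid_rewrite tact_canon. rewrite pullTL_l. apply TL_ext_in; intros zs _ _.
  rewrite pull_l. apply tr_ext; intros z1 _. rewrite pull_l. apply tr_ext; intros z2 _.
  rewrite pull_l. apply tr_ext; intros v _. rewrite slot_right by auto. reflexivity.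
Qed.

Lemma D4 m B L T xs y1 y2 a b : IsO m B ->
  fsum m (fun c => conj m B L c y1 * tact m B T xs c y2 a b) =
  tact m B (fun zs z1 z2 a' b' => fsum m (fun c => L c z1 * T zs c z2 a' b')) xs y1 y2 a b.
Proof.
  intros HO. setoid_rewrite tact_canon. rewrite pullTL_r. apply TL_ext_in; intros zs _ _.
  rewrite slot_trans by auto. apply tr_ext; intros z1 _.
  rewrite pull_r. apply tr_ext; intros z2 _. rewrite pull_r. apply tr_ext; intros v _.
  rewrite pull_r. reflexivity.
Qed.

Lemma D5 m B L T xs y1 y2 a b : IsO m B ->
  fsum m (fun c => conj m B L c y2 * tact m B T xs y1 c a b) =
  tact m B (fun zs z1 z2 a' b' => fsum m (fun c => L c z2 * T zs z1 c a' b')) xs y1 y2 a b.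
Proof.
  intros HO. setoid_rewrite tact_canon. rewrite pullTL_r. apply TL_ext_in; intros zs _ _.
  rewrite pull_r. apply tr_ext; intros z1 _.
  rewrite slot_trans by auto. apply tr_ext; intros z2 _. rewrite pull_r. apply tr_ext; intros v _.
  rewrite pull_r. reflexivity.
Qed.

Lemma pull2 m n k B K H x :
  fsum n (fun p => fsum k (fun c => K p c * tr m B (fun u => H p c u) x)) =
  tr m B (fun u => fsum n (fun p => fsum k (fun c => K p c * H p c u))) x.
Proof. rewrite tr_fsum. apply fsum_ext; intros. rewrite pull_r. reflexivity. Qed.

Lemma D3 m B L T xs y1 y2 a b : IsO m B ->
  fsum (length xs) (fun p => fsum m (fun c => conj m B L c (nth p xs O) * tact m B T (replace_nth p c xs) y1 y2 a b)) =
  tact m B (fun zs z1 z2 a' b' => fsum (length zs) (fun p => fsum m (fun c => L c (nth p zs O) * T (replace_nth p c zs) z1 z2 a' b'))) xs y1 y2 a b.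
Proof.
  intros HO. setoid_rewrite tact_canon.
  rewrite (fsum_ext _ _ (fun p => TL m B (fun zs => fsum m (fun c => L c (nth p zs O) *
     tr m B (fun z1 => tr m B (fun z2 => tr m B (fun c0 => tr m B (fun d => T (replace_nth p c zs) z1 z2 c0 d) b) a) y2) y1)) xs)).
  2:{ intros p Hp. rewrite LS by auto. reflexivity. }
  rewrite <- TL_fsum. apply TL_ext_in; intros zs Hl _. rewrite Hl.
  rewrite pull2. apply tr_ext; intros z1 _.
  rewrite pull2. apply tr_ext; intros z2 _.
  rewrite pull2. apply tr_ext; intros v _.
  rewrite pull2. reflexivity.
Qed.

Lemma DE m B L T T' xs y1 y2 a b : IsO m B ->
  (forall zs z1 z2 c d, length zs = length xs -> Forall (fun z => (z < m)%nat) zs ->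
     (z1 < m)%nat -> (z2 < m)%nat -> (c < m)%nat -> (d < m)%nat ->
     T' zs z1 z2 c d = tact m B T zs z1 z2 c d) ->
  Forall (fun z => (z < m)%nat) xs -> (y1 < m)%nat -> (y2 < m)%nat -> (a < m)%nat -> (b < m)%nat ->
  deriv m (conj m B L) T' xs y1 y2 a b = tact m B (deriv m L T) xs y1 y2 a b.
Proof.
  intros HO HT Hxs H1 H2 Ha Hb. unfold deriv. rewrite !tact_minus.
  rewrite <- D1, <- D2, <- D3, <- D4, <- D5 by auto.
  rewrite (fsum_ext m (fun c => conj m B L a c * T' xs y1 y2 c b) (fun c => conj m B L a c * tact m B T xs y1 y2 c b))
    by (intros; rewrite HT; auto).
  rewrite (fsum_ext m (fun c => T' xs y1 y2 a c * conj m B L c b) (fun c => tact m B T xs y1 y2 a c * conj m B L c b))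
    by (intros; rewrite HT; auto).
  rewrite (fsum_ext m (fun c => conj m B L c y1 * T' xs c y2 a b) (fun c => conj m B L c y1 * tact m B T xs c y2 a b))
    by (intros; rewrite HT; auto).
  rewrite (fsum_ext m (fun c => conj m B L c y2 * T' xs y1 c a b) (fun c => conj m B L c y2 * tact m B T xs y1 c a b))
    by (intros; rewrite HT; auto).
  rewrite (fsum_ext (length xs) (fun p => fsum m (fun c => conj m B L c (nth p xs O) * T' (replace_nth p c xs) y1 y2 a b))
     (fun p => fsum m (fun c => conj m B L c (nth p xs O) * tact m B T (replace_nth p c xs) y1 y2 a b))).
  - reflexivity.
  - intros p Hp. apply fsum_ext; intros c Hc. rewrite HT; auto.
    + apply length_replace.
    + apply Forall_replace; auto.
Qed.

Lemma pull2l m n k B K H x :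
  fsum n (fun p => fsum k (fun c => tr m B (fun u => H p c u) x * K p c)) =
  tr m B (fun u => fsum n (fun p => fsum k (fun c => H p c u * K p c))) x.
Proof. rewrite tr_fsum. apply fsum_ext; intros. rewrite pull_l. reflexivity. Qed.

Lemma deriv_tr m B L T x xs y1 y2 a b :
  deriv m (fun a' b' => tr m B (fun u => L u a' b') x) T xs y1 y2 a b =
  tr m B (fun u => deriv m (L u) T xs y1 y2 a b) x.
Proof.
  unfold deriv. rewrite !tr_minus. rewrite pull_l, pull_r, pull2l, pull_l, pull_l. reflexivity.
Qed.

Lemma tact_tr m B G x xs y1 y2 a b :
  tact m B (fun zs z1 z2 c d => tr m B (fun u => G u zs z1 z2 c d) x) xs y1 y2 a b =
  tr m B (fun u => tact m B (G u) xs y1 y2 a b) x.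
Proof.
  rewrite tact_canon. setoid_rewrite tact_canon. rewrite <- TL_tr_swap.
  apply TL_ext_in; intros zs _ _.
  symmetry. rewrite tr_swap. apply tr_ext; intros.
  rewrite tr_swap. apply tr_ext; intros.
  rewrite tr_swap. apply tr_ext; intros.
  rewrite tr_swap. apply tr_ext; intros.
  reflexivity.
Qed.

Definition HT1 (q m : nat) (B : nat -> nat -> R) (c c' : Br) : Prop :=
  forall x y z, c' (q + x)%nat (q + y)%nat (q + z)%nat =
    tr m B (fun u => tr m B (fun v => tr m B (fun w => c (q + u)%nat (q + v)%nat (q + w)%nat) z) y) x.
Definition HT2 (q m : nat) (A B : nat -> nat -> R) (c c' : Br) : Prop :=
  forall x y h, (h < q)%nat -> c' (q + x)%nat (q + y)%nat h =
    tr m B (fun u => tr m B (fun v => fsum q (fun l => A h l * c (q + u)%nat (q + v)%nat l)) y) x.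
Definition HT3 (q m : nat) (Ai B : nat -> nat -> R) (c c' : Br) : Prop :=
  forall h y z, (h < q)%nat -> c' h (q + y)%nat (q + z)%nat =
    fsum q (fun al => Ai al h * tr m B (fun v => tr m B (fun w => c al (q + v)%nat (q + w)%nat) z) y).

Lemma EqLam q m B c c' x a b : HT1 q m B c c' ->
  Lam q m c' x a b = tr m B (fun u => conj m B (Lam q m c u) a b) x.
Proof.
  intros H1. unfold Lam at 1. rewrite !H1.
  transitivity (tr m B (fun u => / 2 * conj m B (fun v w => c (q+u)%nat (q+w)%nat (q+v)%nat) a b
     + / 2 * (conj m B (fun v w => c (q+v)%nat (q+u)%nat (q+w)%nat) a b
              + conj m B (fun v w => c (q+v)%nat (q+w)%nat (q+u)%nat) a b)) x).
  2:{ apply tr_ext; intros. unfold Lam. rewrite conj_plus, conj_mult, conj_mult, conj_plus. reflexivity. }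
  rewrite tr_plus, tr_mult, tr_mult, tr_plus. f_equal; [f_equal|f_equal; f_equal].
  - apply tr_ext; intros u _. unfold conj. rewrite tr_swap. reflexivity.
  - unfold conj. rewrite tr_swap. reflexivity.
  - unfold conj.
    rewrite (tr_ext m B _ (fun v => tr m B (fun u => tr m B (fun w => c (q + v)%nat (q + w)%nat (q + u)%nat) b) x))
      by (intros; apply tr_swap).
    rewrite tr_swap. reflexivity.
Qed.

Lemma EqAdh q m Ai B c c' h a b : HT3 q m Ai B c c' -> (h < q)%nat ->
  adh q m c' h a b = fsum q (fun al => Ai al h * conj m B (adh q m c al) a b).
Proof.
  intros H3 Hh. unfold adh at 1. rewrite H3 by auto. apply fsum_ext; intros. f_equal.
  unfold conj, adh. rewrite tr_swap. reflexivity.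
Qed.

Lemma tr2_lin m B F1 F2 F3 F4 x y :
  tr m B (fun u => tr m B (fun v => F1 u v + F2 u v - (F3 u v - F4 u v)) y) x =
  tr m B (fun u => tr m B (fun v => F1 u v) y) x + tr m B (fun u => tr m B (fun v => F2 u v) y) x
  - (tr m B (fun u => tr m B (fun v => F3 u v) y) x - tr m B (fun u => tr m B (fun v => F4 u v) y) x).
Proof.
  transitivity (tr m B (fun u => tr m B (F1 u) y + tr m B (F2 u) y - (tr m B (F3 u) y - tr m B (F4 u) y)) x).
  - apply tr_ext; intros. rewrite tr_minus, tr_plus, tr_minus. reflexivity.
  - rewrite tr_minus, tr_plus, tr_minus. reflexivity.
Qed.

Lemma EqRm0 q m A Ai B c c' x y a b : IsGL q A Ai -> IsO m B ->
  HT1 q m B c c' -> HT2 q m A B c c' -> HT3 q m Ai B c c' ->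
  Rm0 q m c' x y a b = tr m B (fun u => tr m B (fun v => conj m B (Rm0 q m c u v) a b) y) x.
Proof.
  intros HG HO H1 H2 H3.
  assert (EL := fun x a b => EqLam q m B c c' x a b H1).
  unfold HT1 in H1. unfold HT2 in H2.
  transitivity (tr m B (fun u => tr m B (fun v =>
      fsum m (fun z => c (q+u)%nat (q+v)%nat (q+z)%nat * conj m B (Lam q m c z) a b)
    + fsum q (fun h => c (q+u)%nat (q+v)%nat h * conj m B (adh q m c h) a b)
    - (conj m B (mm m (Lam q m c u) (Lam q m c v)) a b - conj m B (mm m (Lam q m c v) (Lam q m c u)) a b)) y) x).
  2:{ apply tr_ext; intros u _. apply tr_ext; intros v _. unfold Rm0.
      rewrite conj_minus, conj_plus, conj_minus, !conj_fsum. f_equal. f_equal.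
      - apply fsum_ext; intros. rewrite <- conj_mult. reflexivity.
      - apply fsum_ext; intros. rewrite <- conj_mult. reflexivity. }
  rewrite tr2_lin. unfold Rm0 at 1. f_equal; [f_equal|f_equal].
  - setoid_rewrite EL. setoid_rewrite H1.
    rewrite pull_l. apply tr_ext; intros u _. rewrite pull_l. apply tr_ext; intros v _.
    apply inner; auto.
  - rewrite (fsum_ext q _ (fun h => tr m B (fun u => tr m B (fun v => fsum q (fun l => A h l * c (q + u)%nat (q + v)%nat l)) y) x
        * fsum q (fun al => Ai al h * conj m B (adh q m c al) a b))).
    2:{ intros h Hh. rewrite H2, (EqAdh q m Ai B c c') by auto. reflexivity. }
    rewrite pull_l. apply tr_ext; intros u _. rewrite pull_l. apply tr_ext; intros v _.
    apply GL_inner; auto.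
  - unfold mm at 1. setoid_rewrite EL. rewrite pull_l. apply tr_ext; intros u _.
    rewrite pull_r. apply tr_ext; intros v _. apply mm_conj; auto.
  - unfold mm at 1. setoid_rewrite EL. rewrite pull_l. symmetry. rewrite tr_swap. apply tr_ext; intros u _.
    rewrite pull_r. apply tr_ext; intros v _. symmetry. apply mm_conj; auto.
Qed.

Lemma EqRmK q m A Ai B c c' : IsGL q A Ai -> IsO m B ->
  HT1 q m B c c' -> HT2 q m A B c c' -> HT3 q m Ai B c c' ->
  forall k xs y1 y2 a b, length xs = k -> Forall (fun z => (z < m)%nat) xs ->
  (y1 < m)%nat -> (y2 < m)%nat -> (a < m)%nat -> (b < m)%nat ->
  RmK q m c' k xs y1 y2 a b = tact m B (RmK q m c k) xs y1 y2 a b.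
Proof.
  intros HG HO H1 H2 H3 k. induction k as [|k IH]; intros xs y1 y2 a b Hl Hf Hy1 Hy2 Ha Hb.
  - destruct xs; simpl in Hl; try lia.
    rewrite tact_canon, TL_nil. simpl. rewrite (EqRm0 q m A Ai B c c') by auto. reflexivity.
  - destruct xs as [|x xs]; simpl in Hl; try lia. inversion Hf; subst.
    injection Hl as Hl; subst k. simpl RmK at 1.
    replace (Lam q m c' x) with (conj m B (fun v w => tr m B (fun u => Lam q m c u v w) x)).
    2:{ extensionality a'. extensionality b'. rewrite conj_tr. symmetry. apply EqLam; auto. }
    rewrite (DE m B _ (RmK q m c (length xs)) (RmK q m c' (length xs))); auto.
    replace (deriv m (fun v w => tr m B (fun u => Lam q m c u v w) x) (RmK q m c (length xs)))
      with (fun zs z1 z2 c0 d => tr m B (fun u => deriv m (Lam q m c u) (RmK q m c (length xs)) zs z1 z2 c0 d) x).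
    2:{ extensionality zs. extensionality z1. extensionality z2. extensionality c0. extensionality d.
        symmetry. apply deriv_tr. }
    rewrite tact_tr. rewrite tact_canon, TL_cons. apply tr_ext; intros u _.
    rewrite tact_canon. reflexivity.
Qed.

Lemma act_nest N g gi c i j k :
  act N g gi c i j k = fsum N (fun a => gi a i * fsum N (fun b => gi b j * fsum N (fun l => g k l * c a b l))).
Proof. unfold act. apply fsum_ext; intros. rewrite <- fsum_mult_l. apply fsum_ext; intros.
  rewrite <- fsum_mult_l. setoid_rewrite <- fsum_mult_l. apply fsum_ext; intros. ring. Qed.

Lemma blk_hi_l q m P Q x F :
  fsum (q + m) (fun a => blk q P Q a (q + x)%nat * F a) = fsum m (fun u => Q u x * F (q + u)%nat).
Proof.
  rewrite fsum_split. rewrite fsum_zero.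
  - rewrite Rplus_0_l. apply fsum_ext; intros u _. unfold blk.
    replace ((q + u <? q)%nat) with false by (symmetry; apply Nat.ltb_ge; lia).
    replace ((q <=? q + u)%nat) with true by (symmetry; apply Nat.leb_le; lia).
    replace ((q <=? q + x)%nat) with true by (symmetry; apply Nat.leb_le; lia). simpl.
    replace (q + u - q)%nat with u by lia. replace (q + x - q)%nat with x by lia. reflexivity.
  - intros a Ha. unfold blk.
    replace ((q + x <? q)%nat) with false by (symmetry; apply Nat.ltb_ge; lia).
    replace ((q <=? a)%nat) with false by (symmetry; apply Nat.leb_gt; lia).
    rewrite andb_false_r. simpl. ring.
Qed.

Lemma blk_lo_l q m P Q h F : (h < q)%nat ->
  fsum (q + m) (fun a => blk q P Q a h * F a) = fsum q (fun a => P a h * F a).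
Proof.
  intros Hh. rewrite fsum_split. rewrite (fsum_zero m).
  - rewrite Rplus_0_r. apply fsum_ext; intros a Ha. unfold blk.
    replace ((a <? q)%nat) with true by (symmetry; apply Nat.ltb_lt; lia).
    replace ((h <? q)%nat) with true by (symmetry; apply Nat.ltb_lt; lia). reflexivity.
  - intros u Hu. unfold blk.
    replace ((q + u <? q)%nat) with false by (symmetry; apply Nat.ltb_ge; lia).
    replace ((q <=? h)%nat) with false by (symmetry; apply Nat.leb_gt; lia).
    rewrite andb_false_r. simpl. ring.
Qed.

Lemma blk_hi_r q m P Q z F :
  fsum (q + m) (fun l => blk q P Q (q + z)%nat l * F l) = fsum m (fun w => Q z w * F (q + w)%nat).
Proof.
  rewrite fsum_split. rewrite fsum_zero.
  - rewrite Rplus_0_l. apply fsum_ext; intros u _. unfold blk.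
    replace ((q + z <? q)%nat) with false by (symmetry; apply Nat.ltb_ge; lia).
    replace ((q <=? q + u)%nat) with true by (symmetry; apply Nat.leb_le; lia).
    replace ((q <=? q + z)%nat) with true by (symmetry; apply Nat.leb_le; lia). simpl.
    replace (q + u - q)%nat with u by lia. replace (q + z - q)%nat with z by lia. reflexivity.
  - intros a Ha. unfold blk.
    replace ((q + z <? q)%nat) with false by (symmetry; apply Nat.ltb_ge; lia).
    replace ((q <=? a)%nat) with false by (symmetry; apply Nat.leb_gt; lia).
    rewrite andb_false_r. simpl. ring.
Qed.

Lemma blk_lo_r q m P Q h F : (h < q)%nat ->
  fsum (q + m) (fun l => blk q P Q h l * F l) = fsum q (fun l => P h l * F l).
Proof.
  intros Hh. rewrite fsum_split. rewrite (fsum_zero m).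
  - rewrite Rplus_0_r. apply fsum_ext; intros a Ha. unfold blk.
    replace ((a <? q)%nat) with true by (symmetry; apply Nat.ltb_lt; lia).
    replace ((h <? q)%nat) with true by (symmetry; apply Nat.ltb_lt; lia). reflexivity.
  - intros u Hu. unfold blk.
    replace ((q + u <? q)%nat) with false by (symmetry; apply Nat.ltb_ge; lia).
    replace ((q <=? h)%nat) with false by (symmetry; apply Nat.leb_gt; lia).
    rewrite andb_false_r. simpl. ring.
Qed.

Lemma actG_HT1 q m A Ai B c : HT1 q m B c (actG q m A Ai B c).
Proof.
  intros x y z. unfold actG. rewrite act_nest. rewrite blk_hi_l. unfold tr. apply fsum_ext; intros u _.
  unfold transp. f_equal. rewrite blk_hi_l. apply fsum_ext; intros v _. f_equal.
  rewrite blk_hi_r. apply fsum_ext; intros w _. ring.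
Qed.

Lemma actG_HT2 q m A Ai B c : HT2 q m A B c (actG q m A Ai B c).
Proof.
  intros x y h Hh. unfold actG. rewrite act_nest. rewrite blk_hi_l. unfold tr. apply fsum_ext; intros u _.
  unfold transp. f_equal. rewrite blk_hi_l. apply fsum_ext; intros v _. f_equal.
  rewrite blk_lo_r by auto. reflexivity.
Qed.

Lemma actG_HT3 q m A Ai B c : HT3 q m Ai B c (actG q m A Ai B c).
Proof.
  intros h y z Hh. unfold actG. rewrite act_nest. rewrite blk_lo_l by auto. apply fsum_ext; intros al _.
  f_equal. rewrite blk_hi_l. unfold tr. apply fsum_ext; intros v _. unfold transp. f_equal.
  rewrite blk_hi_r. apply fsum_ext; intros w _. ring.
Qed.

Definition T5 (T : Tens) (zs ws : list nat) : R :=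
  T zs (nth 0 ws O) (nth 1 ws O) (nth 2 ws O) (nth 3 ws O).

Lemma tact_TL m P T xs y1 y2 a b :
  tact m P T xs y1 y2 a b = TL m P (fun zs => TL m P (T5 T zs) [y1; y2; a; b]) xs.
Proof.
  rewrite tact_canon. apply TL_ext_in; intros.
  rewrite TL_cons. apply tr_ext; intros. rewrite TL_cons. apply tr_ext; intros.
  rewrite TL_cons. apply tr_ext; intros. rewrite TL_cons. apply tr_ext; intros.
  rewrite TL_nil. reflexivity.
Qed.

Lemma TL_TL_swap m P Q F ys zs :
  TL m P (fun ws => TL m Q (fun zs' => F ws zs') zs) ys = TL m Q (fun zs' => TL m P (fun ws => F ws zs') ys) zs.
Proof.
  revert F; induction ys as [|y ys IH]; intros F.
  - rewrite TL_nil. apply TL_ext_in; intros. rewrite TL_nil. reflexivity.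
  - rewrite TL_cons. setoid_rewrite IH. rewrite <- TL_tr_swap. apply TL_ext_in; intros.
    rewrite TL_cons. reflexivity.
Qed.

Lemma tact_comp m P Q T xs y1 y2 a b :
  tact m (mm m P Q) T xs y1 y2 a b = tact m P (tact m Q T) xs y1 y2 a b.
Proof.
  rewrite !tact_TL.
  rewrite (TL_ext_in m P (fun zs => TL m P (T5 (tact m Q T) zs) [y1; y2; a; b])
     (fun zs => TL m Q (fun zs' => TL m (mm m P Q) (T5 T zs') [y1; y2; a; b]) zs)).
  - rewrite TL_comp. reflexivity.
  - intros zs Hl Hf.
    rewrite (TL_ext_in m P (T5 (tact m Q T) zs) (fun ws => TL m Q (fun zs' => TL m Q (T5 T zs') ws) zs)).
    + rewrite TL_TL_swap. apply TL_ext_in; intros. apply TL_comp.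
    + intros ws Hw _. unfold T5 at 1. rewrite tact_TL. apply TL_ext_in; intros.
      destruct ws as [|w0 [|w1 [|w2 [|w3 [|]]]]]; simpl in Hw; try lia. reflexivity.
Qed.

Lemma IsO_mm m P Q : IsO m P -> IsO m Q -> IsO m (mm m P Q).
Proof.
  intros HP HQ i j Hi Hj. unfold mm.
  transitivity (fsum m (fun u => fsum m (fun v => Q u i * Q v j * fsum m (fun l => P l u * P l v)))).
  - setoid_rewrite fsum_prod. rewrite fsum_swap. apply fsum_ext; intros.
    rewrite fsum_swap. apply fsum_ext; intros. rewrite <- fsum_mult_l. apply fsum_ext; intros. ring.
  - rewrite <- (HQ i j Hi Hj). apply fsum_ext; intros u Hu.
    rewrite (fsum_ext m _ (fun v => kdelta v u * (Q u i * Q v j))).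
    + rewrite fsum_delta_l; auto.
    + intros v Hv. rewrite (HP u v Hu Hv). rewrite kdelta_sym. ring.
Qed.

Lemma CV_const c : Un_cv (fun _ => c) c.
Proof. intros eps He. exists O. intros. unfold Rdist. rewrite Rminus_diag, Rabs_R0. auto. Qed.

Lemma CV_fsum n (f : nat -> nat -> R) l :
  (forall i, (i < n)%nat -> Un_cv (fun k => f k i) (l i)) -> Un_cv (fun k => fsum n (f k)) (fsum n l).
Proof.
  induction n; intros H; simpl.
  - apply CV_const.
  - apply CV_plus. apply IHn; intros; apply H; lia. apply H; lia.
Qed.

Lemma CV_sumLists m k (f : nat -> list nat -> R) l :
  (forall zs, length zs = k -> Forall (fun z => (z < m)%nat) zs -> Un_cv (fun n => f n zs) (l zs)) ->
  Un_cv (fun n => sumLists m k (f n)) (sumLists m k l).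
Proof.
  revert f l; induction k; intros f l H; simpl.
  - apply H; auto.
  - apply CV_fsum; intros z Hz. apply (IHk (fun n zs => f n (z :: zs)) (fun zs => l (z :: zs))).
    intros; apply H; simpl; auto.
Qed.

Ltac cvt := repeat (first [ apply CV_const | apply CV_minus | apply CV_plus | apply CV_mult
                          | (apply CV_fsum; intros) ]).

Definition CVB (q m : nat) (cs : nat -> Br) (c : Br) : Prop :=
  forall i j k, (i < q + m)%nat -> (j < q + m)%nat -> (k < q + m)%nat -> Un_cv (fun n => cs n i j k) (c i j k).

Lemma CV_Lam q m cs c x a b : CVB q m cs c -> (x < m)%nat -> (a < m)%nat -> (b < m)%nat ->
  Un_cv (fun n => Lam q m (cs n) x a b) (Lam q m c x a b).
Proof. intros H Hx Ha Hb. unfold Lam. cvt; apply H; lia. Qed.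

Lemma CV_Rm0 q m cs c x y a b : CVB q m cs c -> (x < m)%nat -> (y < m)%nat -> (a < m)%nat -> (b < m)%nat ->
  Un_cv (fun n => Rm0 q m (cs n) x y a b) (Rm0 q m c x y a b).
Proof.
  intros H Hx Hy Ha Hb. unfold Rm0, mm, adh. cvt; try (apply CV_Lam; auto; lia); apply H; lia.
Qed.

Lemma CV_deriv m (Ls : nat -> nat -> nat -> R) L (Ts : nat -> Tens) T xs y1 y2 a b :
  (forall u v, (u < m)%nat -> (v < m)%nat -> Un_cv (fun n => Ls n u v) (L u v)) ->
  (forall zs z1 z2 c d, length zs = length xs -> Forall (fun z => (z < m)%nat) zs ->
     (z1 < m)%nat -> (z2 < m)%nat -> (c < m)%nat -> (d < m)%nat ->
     Un_cv (fun n => Ts n zs z1 z2 c d) (T zs z1 z2 c d)) ->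
  Forall (fun z => (z < m)%nat) xs -> (y1 < m)%nat -> (y2 < m)%nat -> (a < m)%nat -> (b < m)%nat ->
  Un_cv (fun n => deriv m (Ls n) (Ts n) xs y1 y2 a b) (deriv m L T xs y1 y2 a b).
Proof.
  intros HL HT Hf H1 H2 Ha Hb. unfold deriv. cvt.
  all: try (apply HL; auto; apply Forall_nth; auto).
  all: try (apply HT; auto; try apply length_replace; apply Forall_replace; auto).
Qed.

Lemma CV_RmK q m cs c : CVB q m cs c ->
  forall k xs y1 y2 a b, Forall (fun z => (z < m)%nat) xs ->
  (y1 < m)%nat -> (y2 < m)%nat -> (a < m)%nat -> (b < m)%nat ->
  Un_cv (fun n => RmK q m (cs n) k xs y1 y2 a b) (RmK q m c k xs y1 y2 a b).
Proof.
  intros H k. induction k; intros xs y1 y2 a b Hf H1 H2 Ha Hb; simpl.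
  - apply CV_Rm0; auto.
  - destruct xs as [|x xs]. apply CV_const. inversion Hf; subst.
    apply CV_deriv; auto. intros; apply CV_Lam; auto.
Qed.

Lemma CV_tact m P (Ts : nat -> Tens) T xs y1 y2 a b :
  (forall zs z1 z2 c d, length zs = length xs -> Forall (fun z => (z < m)%nat) zs ->
     (z1 < m)%nat -> (z2 < m)%nat -> (c < m)%nat -> (d < m)%nat ->
     Un_cv (fun n => Ts n zs z1 z2 c d) (T zs z1 z2 c d)) ->
  Un_cv (fun n => tact m P (Ts n) xs y1 y2 a b) (tact m P T xs y1 y2 a b).
Proof.
  intros HT. unfold tact. apply CV_sumLists; intros zs Hl Hf. cvt. apply HT; auto.
Qed.

Lemma RmK_ext q m c1 c2 :
  (forall i j k, (i < q + m)%nat -> (j < q + m)%nat -> (k < q + m)%nat -> c1 i j k = c2 i j k) ->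
  forall k xs y1 y2 a b, Forall (fun z => (z < m)%nat) xs ->
  (y1 < m)%nat -> (y2 < m)%nat -> (a < m)%nat -> (b < m)%nat ->
  RmK q m c1 k xs y1 y2 a b = RmK q m c2 k xs y1 y2 a b.
Proof.
  intros H k xs y1 y2 a b Hf H1 H2 Ha Hb.
  apply (UL_sequence (fun _ => RmK q m c1 k xs y1 y2 a b)).
  - apply CV_const.
  - apply (CV_RmK q m (fun _ => c1) c2); auto. intros i j k' Hi Hj Hk. rewrite H by auto. apply CV_const.
Qed.

Lemma relab_hi q q' x : (q' <= q)%nat -> relab q q' (q' + x) = (q + x)%nat.
Proof. intros H. unfold relab. replace ((q' + x <? q')%nat) with false by (symmetry; apply Nat.ltb_ge; lia). lia. Qed.
Lemma relab_lo q q' h : (h < q')%nat -> relab q q' h = h.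
Proof. intros H. unfold relab. replace ((h <? q')%nat) with true by (symmetry; apply Nat.ltb_lt; lia). auto. Qed.

Lemma Lam_restr q q' m c x : (q' <= q)%nat -> Lam q' m (restr q q' c) x = Lam q m c x.
Proof. intros H. extensionality a. extensionality b. unfold Lam, restr. rewrite !relab_hi by auto. reflexivity. Qed.

Lemma ker_zero q q' m c h j k : KerAdapted q q' m c -> (q' <= h)%nat -> (h < q)%nat -> (j < m)%nat -> (k < q + m)%nat ->
  c h (q + j)%nat k = 0.
Proof.
  intros HK Hh1 Hh2 Hj Hk.
  assert (KZ : KillsRm q m c (fun i => if Nat.eqb i h then 1 else 0)).
  { apply HK. intros i Hi. destruct (Nat.eqb_spec i h); [lia|auto]. }
  unfold KillsRm in KZ. specialize (KZ j k Hj Hk). cbv beta in KZ. rewrite fsum_indic in KZ by auto. exact KZ.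
Qed.

Lemma fsum_split' q' q f : (q' <= q)%nat -> fsum q f = fsum q' f + fsum (q - q') (fun i => f (q' + i)%nat).
Proof. intros H. rewrite <- fsum_split. f_equal. lia. Qed.

Lemma Rm0_restr q q' m c x y a b : (q' <= q)%nat -> KerAdapted q q' m c -> (a < m)%nat -> (b < m)%nat ->
  Rm0 q' m (restr q q' c) x y a b = Rm0 q m c x y a b.
Proof.
  intros Hq HK Ha Hb. unfold Rm0. assert (LR : forall x a b, Lam q' m (restr q q' c) x a b = Lam q m c x a b) by (intros; rewrite Lam_restr; auto). unfold mm. setoid_rewrite LR.
  f_equal. f_equal.
  - apply fsum_ext; intros z _. unfold restr at 1. rewrite !relab_hi by auto. reflexivity.
  - rewrite (fsum_split' q' q) by auto.
    rewrite (fsum_zero (q - q')). 2:{ intros i Hi. unfold adh. rewrite (ker_zero q q' m c (q' + i) b (q + a)); try ring; try lia; auto. }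
    rewrite Rplus_0_r. apply fsum_ext; intros h Hh. unfold restr, adh.
    rewrite !relab_hi by auto. rewrite !relab_lo by auto. reflexivity.
Qed.

Lemma deriv_ext m L T1 T2 xs y1 y2 a b :
  (forall zs z1 z2 c d, length zs = length xs -> Forall (fun z => (z < m)%nat) zs ->
     (z1 < m)%nat -> (z2 < m)%nat -> (c < m)%nat -> (d < m)%nat -> T1 zs z1 z2 c d = T2 zs z1 z2 c d) ->
  Forall (fun z => (z < m)%nat) xs -> (y1 < m)%nat -> (y2 < m)%nat -> (a < m)%nat -> (b < m)%nat ->
  deriv m L T1 xs y1 y2 a b = deriv m L T2 xs y1 y2 a b.
Proof.
  intros HT Hf H1 H2 Ha Hb. unfold deriv.
  f_equal; [f_equal; [f_equal; [f_equal|]|]|].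
  all: try (apply fsum_ext; intros; rewrite HT; auto; fail).
  apply fsum_ext; intros; apply fsum_ext; intros. rewrite HT; auto.
  apply length_replace. apply Forall_replace; auto.
Qed.

Lemma RmK_restr q q' m c : (q' <= q)%nat -> KerAdapted q q' m c ->
  forall k xs y1 y2 a b, Forall (fun z => (z < m)%nat) xs ->
  (y1 < m)%nat -> (y2 < m)%nat -> (a < m)%nat -> (b < m)%nat ->
  RmK q' m (restr q q' c) k xs y1 y2 a b = RmK q m c k xs y1 y2 a b.
Proof.
  intros Hq HK k. induction k; intros xs y1 y2 a b Hf H1 H2 Ha Hb; simpl.
  - apply Rm0_restr; auto.
  - destruct xs as [|x xs]; auto. inversion Hf; subst. rewrite Lam_restr by auto.
    apply deriv_ext; auto.
Qed.

Lemma max_finite (P : nat -> Prop) n :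
  (forall k, (k <= n)%nat -> ~ P k) \/ exists k, (k <= n)%nat /\ P k /\ forall k', (k' <= n)%nat -> P k' -> (k' <= k)%nat.
Proof.
  induction n.
  - destruct (classic (P O)).
    + right. exists O. split; [lia|split; [auto|intros; lia]].
    + left. intros k Hk. replace k with O by lia. auto.
  - destruct (classic (P (S n))).
    + right. exists (S n). split; [lia|split; [auto|intros; lia]].
    + destruct IHn as [IH|[k [Hk [Pk Hmax]]]].
      * left. intros k Hk. destruct (Nat.eq_dec k (S n)). subst; auto. apply IH; lia.
      * right. exists k. split; [lia|]. split; auto. intros k' Hk' Pk'.
        destruct (Nat.eq_dec k' (S n)). subst; contradiction. apply Hmax; auto; lia.
Qed.

Lemma IsGL_id q : IsGL q kdelta kdelta.
Proof. intros i j Hi Hj. split; rewrite fsum_delta_r; auto. Qed.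
Lemma IsO_id m : IsO m kdelta.
Proof. intros i j Hi Hj. rewrite fsum_delta_l; auto. Qed.

Definition Dat := ((nat -> nat -> R) * (nat -> nat -> R) * (nat -> nat -> R))%type.
Definition dA (d : Dat) := fst (fst d).
Definition dAi (d : Dat) := snd (fst d).
Definition dB (d : Dat) := snd d.

Lemma inv_S_le k K : (k <= K)%nat -> / INR (S K) <= / INR (S k).
Proof. intros H. apply Rinv_le_contravar. apply lt_0_INR; lia. apply le_INR; lia. Qed.

Lemma conv_choice q m mus mu : convV q m mus mu ->
  exists f : nat -> Dat, (forall n, IsGL q (dA (f n)) (dAi (f n)) /\ IsO m (dB (f n))) /\
    CVB q m (fun n => actG q m (dA (f n)) (dAi (f n)) (dB (f n)) (mus n)) mu.
Proof.
  intros HC.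
  set (Good := fun d : Dat => IsGL q (dA d) (dAi d) /\ IsO m (dB d)).
  set (Dist := fun n (d : Dat) eps => forall i j k, (i < q + m)%nat -> (j < q + m)%nat -> (k < q + m)%nat ->
          Rabs (actG q m (dA d) (dAi d) (dB d) (mus n) i j k - mu i j k) < eps).
  set (Q := fun n k => exists d, Good d /\ Dist n d (/ INR (S k))).
  assert (Step : forall n, exists d, Good d /\ forall k, (k <= n)%nat -> Q n k -> Dist n d (/ INR (S k))).
  { intros n. destruct (max_finite (Q n) n) as [Hn|[K [HK [QK Hmax]]]].
    - exists (kdelta, kdelta, kdelta). split.
      + split; [apply IsGL_id|apply IsO_id].
      + intros k Hk Qk. exfalso; apply (Hn k); auto.
    - destruct QK as [d [Gd Dd]]. exists d. split; auto.
      intros k Hk Qk. intros i j l Hi Hj Hl. specialize (Dd i j l Hi Hj Hl).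
      apply Rlt_le_trans with (/ INR (S K)); auto. apply inv_S_le. apply Hmax; auto. }
  set (f := fun n => proj1_sig (constructive_indefinite_description _ (Step n))).
  assert (Hf : forall n, Good (f n) /\ forall k, (k <= n)%nat -> Q n k -> Dist n (f n) (/ INR (S k))).
  { intros n. unfold f. destruct (constructive_indefinite_description _ (Step n)) as [d Hd]. simpl. auto. }
  exists f. split.
  - intros n. apply (Hf n).
  - intros i j k Hi Hj Hk eps Heps.
    destruct (archimed_cor1 eps Heps) as [N [HN HN0]].
    assert (Hpos : / INR (S (pred N)) > 0). { apply Rinv_0_lt_compat. apply lt_0_INR. lia. }
    destruct (HC _ Hpos) as [N0 HN0'].
    exists (Nat.max N0 (pred N)). intros n Hn.
    assert (QnK : Q n (pred N)).
    { destruct (HN0' n ltac:(lia)) as [A [Ai [B [HA [HB HD]]]]].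
      exists (A, Ai, B). split. split; auto. intros i' j' k' Hi' Hj' Hk'. apply HD; auto. }
    destruct (Hf n) as [_ Hd]. specialize (Hd (pred N) ltac:(lia) QnK i j k Hi Hj Hk).
    unfold Rdist. replace (S (pred N)) with N in Hd by lia. lra.
Qed.

Lemma EqRmK_actG q m A Ai B c : IsGL q A Ai -> IsO m B ->
  forall k xs y1 y2 a b, length xs = k -> Forall (fun z => (z < m)%nat) xs ->
  (y1 < m)%nat -> (y2 < m)%nat -> (a < m)%nat -> (b < m)%nat ->
  RmK q m (actG q m A Ai B c) k xs y1 y2 a b = tact m B (RmK q m c k) xs y1 y2 a b.
Proof. intros HG HO. apply (EqRmK q m A Ai B); auto using actG_HT1, actG_HT2, actG_HT3. Qed.

Theorem part1 (m q : nat) (mus : nat -> Br) (q' : nat) (muinf : Br) :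
  alg_conv q m mus q' muinf -> inf_conv q m mus q' muinf.
Proof.
  intros [[Hq [_ HC]] | [Hq [_ [mut [_ [_ [_ [_ [HC [HK HE]]]]]]]]]].
  - subst q'. destruct (conv_choice q m mus muinf HC) as [f [Hf HCV]].
    intros s. exists (fun n => dB (f n)). split. intros n; apply Hf.
    intros k xs y1 y2 a b _ Hl Hxs H1 H2 Ha Hb.
    apply Un_cv_ext with (fun n => RmK q m (actG q m (dA (f n)) (dAi (f n)) (dB (f n)) (mus n)) k xs y1 y2 a b).
    + intros n. destruct (Hf n). apply EqRmK_actG; auto.
    + apply CV_RmK; auto.
  - destruct HE as [A [Ai [B [HA [HB HE]]]]].
    destruct (conv_choice q m mus mut HC) as [f [Hf HCV]].
    intros s. exists (fun n => mm m B (dB (f n))). split.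
    { intros n. apply IsO_mm; auto. apply Hf. }
    intros k xs y1 y2 a b _ Hl Hxs H1 H2 Ha Hb.
    rewrite <- (RmK_ext q' m (actG q' m A Ai B (restr q q' mut)) muinf HE) by auto.
    rewrite EqRmK_actG by auto.
    apply Un_cv_ext with (fun n => tact m B (tact m (dB (f n)) (RmK q m (mus n) k)) xs y1 y2 a b).
    { intros n. symmetry. apply tact_comp. }
    apply CV_tact. intros zs z1 z2 c d Hzl Hzs Hz1 Hz2 Hc Hd.
    rewrite RmK_restr by (auto; lia).
    apply Un_cv_ext with (fun n => RmK q m (actG q m (dA (f n)) (dAi (f n)) (dB (f n)) (mus n)) k zs z1 z2 c d).
    + intros n. destruct (Hf n). apply EqRmK_actG; auto. lia.
    + apply CV_RmK; auto.
Qed.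

Definition muE (i j k : nat) : R :=
  match i with
  | O => match j with
         | 1%nat => match k with 2%nat => 1 | _ => 0 end
         | 2%nat => match k with 1%nat => -1 | _ => 0 end
         | _ => 0 end
  | 1%nat => match j with O => match k with 2%nat => -1 | _ => 0 end | _ => 0 end
  | 2%nat => match j with O => match k with 1%nat => 1 | _ => 0 end | _ => 0 end
  | _ => 0
  end.

Definition mu0 : Br := fun _ _ _ => 0.

Lemma RmK_zero q m c :
  (forall x a b, Lam q m c x a b = 0) -> (forall x y z, c (q + x)%nat (q + y)%nat z = 0) ->
  forall k xs y1 y2 a b, RmK q m c k xs y1 y2 a b = 0.
Proof.
  intros HL HC k. induction k; intros xs y1 y2 a b; simpl.
  - unfold Rm0, mm.
    rewrite (fsum_zero m (fun z => c (q + y1)%nat (q + y2)%nat (q + z)%nat * Lam q m c z a b)) by (intros; rewrite HC; ring).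
    rewrite (fsum_zero q (fun h => c (q + y1)%nat (q + y2)%nat h * adh q m c h a b)) by (intros; rewrite HC; ring).
    rewrite (fsum_zero m (fun l => Lam q m c y1 a l * Lam q m c y2 l b)) by (intros; rewrite HL; ring).
    rewrite (fsum_zero m (fun l => Lam q m c y2 a l * Lam q m c y1 l b)) by (intros; rewrite HL; ring).
    ring.
  - destruct xs; auto. unfold deriv.
    rewrite (fsum_zero m (fun c0 => Lam q m c n a c0 * RmK q m c k xs y1 y2 c0 b)) by (intros; rewrite HL; ring).
    rewrite (fsum_zero m (fun c0 => RmK q m c k xs y1 y2 a c0 * Lam q m c n c0 b)) by (intros; rewrite HL; ring).
    rewrite (fsum_zero (length xs)) by (intros; apply fsum_zero; intros; rewrite HL; ring).
    rewrite (fsum_zero m (fun c0 => Lam q m c n c0 y1 * RmK q m c k xs c0 y2 a b)) by (intros; rewrite HL; ring).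
    rewrite (fsum_zero m (fun c0 => Lam q m c n c0 y2 * RmK q m c k xs y1 c0 a b)) by (intros; rewrite HL; ring).
    ring.
Qed.

Lemma tact_zero m P T xs y1 y2 a b : (forall zs z1 z2 c d, T zs z1 z2 c d = 0) -> tact m P T xs y1 y2 a b = 0.
Proof.
  intros H. unfold tact. apply sumLists_zero; intros.
  rewrite fsum_zero. ring. intros. apply fsum_zero; intros. apply fsum_zero; intros. apply fsum_zero; intros.
  rewrite H; ring.
Qed.

Lemma muE_SS i j k : muE (S i) (S j) k = 0.
Proof. destruct i as [|[|i]]; reflexivity. Qed.

Lemma muE_SS' i j k : muE (1 + i) (1 + j) k = 0.
Proof. apply muE_SS. Qed.

Ltac nat_cases v := destruct v as [|[|[|v]]]; try lia.

Lemma InH_muE : InH 1 2 muE.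
Proof.
  split; [|split; [|split]].
  - split. apply Nat.leb_le; reflexivity. intros i j k Hi Hj Hk. nat_cases i; nat_cases j; nat_cases k; simpl; lra.
  - split; [|split].
    + intros i j k l Hi Hj Hk Hl. nat_cases i; nat_cases j; nat_cases k; nat_cases l; simpl; ring.
    + intros i j k Hi Hj Hk. nat_cases i; nat_cases j; nat_cases k; reflexivity.
    + intros i j k Hi Hj Hk. nat_cases i; nat_cases j; nat_cases k; reflexivity.
  - intros z x y Hz Hx Hy. nat_cases z; nat_cases x; nat_cases y; simpl; ring.
  - intros Z HZ i Hi. nat_cases i. specialize (HZ O 2%nat ltac:(lia) ltac:(lia)). simpl in HZ. lra.
Qed.

Lemma InH_mu0 : InH 0 2 mu0.
Proof.
  split; [|split; [|split]].
  - split. apply Nat.leb_le; reflexivity. intros i j k _ _ _. unfold mu0. ring.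
  - split; [|split].
    + intros i j k l _ _ _ _. unfold mu0. simpl. ring.
    + intros; lia.
    + intros; lia.
  - unfold H2. intros. exfalso; lia.
  - unfold H3. intros. exfalso; lia.
Qed.

Theorem part2 : exists (m q : nat), (1 <= m)%nat /\ (q <= m * (m - 1) / 2)%nat /\
     exists (mus : nat -> Br) (q' : nat) (muinf : Br),
       (forall n, InH q m (mus n)) /\ InH q' m muinf /\
       inf_conv q m mus q' muinf /\ ~ alg_conv q m mus q' muinf.
Proof.
  exists 2%nat, O. split; [lia|split; [apply Nat.leb_le; reflexivity|]].
  exists (fun _ => mu0), 1%nat, muE. split; [intros; apply InH_mu0|split; [apply InH_muE|split]].
  - intros s. exists (fun _ => kdelta). split. intros; apply IsO_id.
    intros k xs y1 y2 a b _ _ _ _ _ _ _.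
    rewrite (RmK_zero 1 2 muE).
    + apply Un_cv_ext with (fun _ => 0). intros n. symmetry. apply tact_zero.
      intros. apply RmK_zero; intros; unfold mu0, Lam; ring.
      apply CV_const.
    + intros x a' b'. unfold Lam. rewrite !muE_SS'. ring.
    + intros x y z. apply muE_SS'.
  - intros [[H _]|[H _]]; lia.
Qed.

Close Scope R_scope.

Theorem proposition3p5 :
  (forall (m q : nat), (1 <= m)%nat -> (q <= m * (m - 1) / 2)%nat ->
     forall (mus : nat -> Br) (q' : nat) (muinf : Br),
       (forall n, InH q m (mus n)) -> InH q' m muinf ->
       alg_conv q m mus q' muinf -> inf_conv q m mus q' muinf)
  /\
  (exists (m q : nat), (1 <= m)%nat /\ (q <= m * (m - 1) / 2)%nat /\
     exists (mus : nat -> Br) (q' : nat) (muinf : Br),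
       (forall n, InH q m (mus n)) /\ InH q' m muinf /\
       inf_conv q m mus q' muinf /\ ~ alg_conv q m mus q' muinf).
Proof.
  split.
  - intros m q _ _ mus q' muinf _ _ H. apply part1; auto.
  - apply part2.
Qed.
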